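(* The class of data languages accepted by deterministic SAFA (DSAFA) is closed under complementation (with respect to $(\Sigma\times D)^*$), but is not closed under union, intersection, concatenation, Kleene closure, reversal, homomorphism, or inverse homomorphism.
   Context: $D$ is a fixed countably infinite set of data values; for a finite alphabet $\Sigma$, data words are elements of $(\Sigma\times D)^*$. A set augmented finite automaton (SAFA) is a tuple $M=(Q,\Sigma\times D,q_0,F,H,\delta)$: $Q$ finite set of states, $q_0\in Q$ initial, $F\subseteq Q$ final, $H=\{h_1,\dots,h_m\}$ a finite collection of (names of) sets of data values, $\delta\subseteq Q\times\Sigma\times C\times OP\times Q$ with $C=\{p(h_i),\,!p(h_i): h_i\in H\}$, $OP=\{-\}\cup\{\mathsf{ins}(h_i):h_i\in H\}$. Configurations are $(q,\langle S_1,\dots,S_m\rangle)$ with $S_i\subseteq D$ finite; initially state $q_0$ and all sets empty. On reading $(a,d)$, a transition $(q,a,\alpha,op,q')$ from the current state may be taken if $\alpha=p(h_i)$ and $d\in S_i$, or $\alpha=\,!p(h_i)$ and $d\notin S_i$; then the state becomes $q'$ and if $op=\mathsf{ins}(h_j)$ the value $d$ is added to $S_j$ ($op=-$ changes nothing). A word is accepted if some run reads it entirely and ends in $F$. A SAFA is deterministic (a DSAFA) if for every $q\in Q$ and $a\in\Sigma$, all transitions from $q$ on letter $a$ test the same set $h_i$, and there is at most one such transition with condition $p(h_i)$ and at most one with condition $!p(h_i)$. Concatenation is $L_1L_2=\{uv:u\in L_1,v\in L_2\}$, Kleene closure is $L^*=\{u_1\cdots u_n:n\ge 0,u_i\in L\}$,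 reversal reverses the order of letters, and a homomorphism is a monoid homomorphism $(\Sigma\times D)^*\to(\Sigma\times D)^*$ determined by images of single letters; ''not closed'' means there exist DSAFA-recognizable languages (and, where relevant, a homomorphism) whose result is not recognized by any DSAFA. *)

(* Defs.v *)
From mathcomp Require Import all_boot.
Set Implicit Arguments. Unset Strict Implicit. Unset Printing Implicit Defensive.

Definition data := nat.

Definition dword (Sigma : finType) := seq (Sigma * data).
Definition dlang (Sigma : finType) := dword Sigma -> Prop.

(* A SAFA with state set [st], sets h_0 .. h_{m-1} indexed by 'I_m.
   A transition (q, a, (b, i), op, q') : the condition is p(h_i) if b = true,
   !p(h_i) if b = false; op = None is "-", op = Some j is ins(h_j). *)
Record SAFA (Sigma : finType) := {
  st : finType;
  nsets : nat;
  q0 : st;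
  final : {set st};
  delta : {set (st * Sigma * (bool * 'I_nsets) * option 'I_nsets * st)%type}
}.

Section Run.
Variables (Sigma : finType) (M : SAFA Sigma).

Definition sets_conf := 'I_(nsets M) -> seq data.

Definition apply_op (op : option 'I_(nsets M)) (d : data) (S : sets_conf)
  : sets_conf :=
  match op with
  | None => S
  | Some j => fun k => if k == j then d :: S k else S k
  end.

Fixpoint acc (q : st M) (S : sets_conf) (w : dword Sigma) : Prop :=
  match w with
  | [::] => q \in final M
  | (a, d) :: w' =>
      exists (b : bool) (i : 'I_(nsets M)) (op : option 'I_(nsets M)) (q' : st M),
        (q, a, (b, i), op, q') \in delta M /\
        (d \in S i) = b /\
        acc q' (apply_op op d S) w'
  end.

Definition accepts (w : dword Sigma) : Prop := acc (q0 M) (fun _ => [::]) w.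

Definition deterministic : Prop :=
  forall q a b1 i1 op1 q1 b2 i2 op2 q2,
    (q, a, (b1, i1), op1, q1) \in delta M ->
    (q, a, (b2, i2), op2, q2) \in delta M ->
    i1 = i2 /\ (b1 = b2 -> op1 = op2 /\ q1 = q2).
End Run.

Definition DSAFA_lang (Sigma : finType) (L : dlang Sigma) : Prop :=
  exists M : SAFA Sigma, deterministic M /\ forall w, L w <-> accepts M w.

Definition lcompl (Sigma : finType) (L : dlang Sigma) : dlang Sigma :=
  fun w => ~ L w.
Definition lunion (Sigma : finType) (L1 L2 : dlang Sigma) : dlang Sigma :=
  fun w => L1 w \/ L2 w.
Definition linter (Sigma : finType) (L1 L2 : dlang Sigma) : dlang Sigma :=
  fun w => L1 w /\ L2 w.
Definition lconcat (Sigma : finType) (L1 L2 : dlang Sigma) : dlang Sigma :=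
  fun w => exists u v, w = u ++ v /\ L1 u /\ L2 v.
Definition lstar (Sigma : finType) (L : dlang Sigma) : dlang Sigma :=
  fun w => exists ws : seq (dword Sigma), w = flatten ws /\ forall u, u \in ws -> L u.
Definition lrev (Sigma : finType) (L : dlang Sigma) : dlang Sigma :=
  fun w => L (rev w).

Definition hom_ext (Sigma : finType) (h : Sigma * data -> dword Sigma)
  (w : dword Sigma) : dword Sigma := flatten (map h w).
Definition limage (Sigma : finType) (h : Sigma * data -> dword Sigma)
  (L : dlang Sigma) : dlang Sigma :=
  fun w => exists u, L u /\ w = hom_ext h u.
Definition lpreimage (Sigma : finType) (h : Sigma * data -> dword Sigma)
  (L : dlang Sigma) : dlang Sigma :=
  fun w => L (hom_ext h w).

(* Main.v *)
Require Import Defs.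
From mathcomp Require Import all_boot.
From Stdlib Require Import Classical Lia.
From mathcomp Require Import zify.
Set Implicit Arguments. Unset Strict Implicit. Unset Printing Implicit Defensive.

Section Gen.
Variables (Sigma : finType) (M : SAFA Sigma).

Lemma acc_agree (w : dword Sigma) (q : st M) (S S' : sets_conf M) :
  (forall d k, d \in map snd w -> (d \in S k) = (d \in S' k)) ->
  acc q S w <-> acc q S' w.
Proof.
elim: w q S S' => [|[a d] w IH] q S S' H //=.
have Hd : forall k, (d \in S k) = (d \in S' k) by move=> k; apply: H; rewrite inE eqxx.
have H' : forall op, forall d' k, d' \in map snd w ->
   (d' \in apply_op op d S k) = (d' \in apply_op op d S' k).
  move=> [j|] d' k Hd' /=; last by apply: H; rewrite inE Hd' orbT.
  case: (k == j); rewrite ?inE; (have -> : (d' \in S k) = (d' \in S' k) by apply: H; rewrite inE Hd' orbT); by [].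
split=> [[b [i [op [q' [H1 [H2 H3]]]]]]|[b [i [op [q' [H1 [H2 H3]]]]]]];
  exists b, i, op, q'; split => //.
  by rewrite -Hd; split => //; apply/(IH _ _ _ (H' op)).
by rewrite Hd; split => //; apply/(IH _ _ _ (H' op)).
Qed.

Hypothesis detM : deterministic M.

Lemma acc_step q S a d b i op q' w :
  (q, a, (b, i), op, q') \in delta M -> (d \in S i) = b ->
  acc q S ((a, d) :: w) <-> acc q' (apply_op op d S) w.
Proof.
move=> Ht Hb /=; split; last by move=> H; exists b, i, op, q'.
move=> [b2 [i2 [op2 [q2 [H1 [H2 H3]]]]]].
have [ei Hb'] := detM Ht H1. subst i2.
have [-> ->] := Hb' (etrans (esym Hb) H2). done.
Qed.

Lemma acc_prefix (p : dword Sigma) (q : st M) (S : sets_conf M) :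
  (forall r, ~ acc q S (p ++ r)) \/
  exists q' (S' : sets_conf M), forall r, acc q S (p ++ r) <-> acc q' S' r.
Proof.
elim: p q S => [|[a d] p IH] q S; first by right; exists q, S.
case: (classic (exists b i op q', (q, a, (b, i), op, q') \in delta M /\ (d \in S i) = b)).
  move=> [b [i [op [q' [H1 H2]]]]].
  case: (IH q' (apply_op op d S)) => [H|[q'' [S'' H]]].
    by left=> r; rewrite cat_cons (acc_step _ H1 H2); apply: H.
  by right; exists q'', S'' => r; rewrite cat_cons (acc_step _ H1 H2); apply: H.
move=> Hn; left=> r /= [b [i [op [q' [H1 [H2 _]]]]]]; apply: Hn.
by exists b, i, op, q'.
Qed.

Lemma acc_merge q S a z1 z2 r :
  (forall b i op q', (q, a, (b, i), op, q') \in delta M -> (z1 \in S i) = (z2 \in S i)) ->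
  all (fun e => (e.2 != z1) && (e.2 != z2)) r ->
  acc q S ((a, z1) :: r) <-> acc q S ((a, z2) :: r).
Proof.
move=> Hz Hr.
have Hag : forall op, forall d k, d \in map snd r ->
   (d \in apply_op op z1 S k) = (d \in apply_op op z2 S k).
  move=> [j|] d k Hd //=; case: (k == j) => //; rewrite !inE.
  move/allP: Hr => Hr; move/mapP: Hd => [e He ->].
  by have /andP[/negbTE -> /negbTE ->] := Hr e He.
split=> /= [[b [i [op [q' [H1 [H2 H3]]]]]]|[b [i [op [q' [H1 [H2 H3]]]]]]];
  exists b, i, op, q'; split => //.
  by rewrite -(Hz _ _ _ _ H1); split => //; apply/(acc_agree _ (Hag op)).
by rewrite (Hz _ _ _ _ H1); split => //; apply/(acc_agree _ (Hag op)).
Qed.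

End Gen.


Definition avoid (Sigma : finType) (z1 z2 : data) (r : dword Sigma) :=
  all (fun e => (e.2 != z1) && (e.2 != z2)) r.

Lemma hard (Sigma : finType) (L : dlang Sigma) : DSAFA_lang L ->
  forall (p : dword Sigma) (a : Sigma) (z1 z2 z3 : data) (r12 r13 r23 : dword Sigma),
  avoid z1 z2 r12 -> avoid z1 z3 r13 -> avoid z2 z3 r23 ->
  (L (p ++ (a, z1) :: r12) <-> L (p ++ (a, z2) :: r12)) \/
  (L (p ++ (a, z1) :: r13) <-> L (p ++ (a, z3) :: r13)) \/
  (L (p ++ (a, z2) :: r23) <-> L (p ++ (a, z3) :: r23)).
Proof.
move=> [M [detM HL]] p a z1 z2 z3 r12 r13 r23 H12 H13 H23.
rewrite !HL /accepts.
case: (acc_prefix detM p (q0 M) (fun _ => [::])) => [Hn|[q [S HS]]].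
  by left; split=> H; exfalso; apply: (Hn _ H).
rewrite !HS.
case: (classic (exists b i op q', (q, a, (b, i), op, q') \in delta M)); last first.
  move=> Hn; left; split=> /= -[b [i [op [q' [H1 _]]]]]; exfalso; apply: Hn;
  by exists b, i, op, q'.
move=> [b0 [i0 [op0 [q0' H0]]]].
have key : forall x y, (x \in S i0) = (y \in S i0) ->
   forall b i op q', (q, a, (b, i), op, q') \in delta M -> (x \in S i) = (y \in S i).
  by move=> x y Hxy b i op q' H1; have [<- _] := detM _ _ _ _ _ _ _ _ _ _ H0 H1.
case E1: (z1 \in S i0); case E2: (z2 \in S i0); case E3: (z3 \in S i0).
- by left; apply: acc_merge => //; apply: key; rewrite E1 E2.
- by left; apply: acc_merge => //; apply: key; rewrite E1 E2.
- by right; left; apply: acc_merge => //; apply: key; rewrite E1 E3.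
- by right; right; apply: acc_merge => //; apply: key; rewrite E2 E3.
- by right; right; apply: acc_merge => //; apply: key; rewrite E2 E3.
- by right; left; apply: acc_merge => //; apply: key; rewrite E1 E3.
- by left; apply: acc_merge => //; apply: key; rewrite E1 E2.
- by left; apply: acc_merge => //; apply: key; rewrite E1 E2.
Qed.


Section Mk.
Variables (Sigma : finType) (k n : nat) (s0 : nat) (fin : nat -> bool)
  (tst : nat -> Sigma -> nat) (nxt : nat -> Sigma -> bool -> option (option nat * nat)).

Definition om (m k : nat) : 'I_k.+1 := Ordinal (ltn_pmod m (ltn0Sn k)).

Definition cv (p : option nat * nat) : option 'I_n.+1 * 'I_k.+1 :=
  (omap (om ^~ n) p.1, om p.2 k).

Definition mkS : SAFA Sigma :=
  {| st := 'I_k.+1; nsets := n.+1; q0 := om s0 k;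
     final := [set q : 'I_k.+1 | fin q];
     delta := [set t : 'I_k.+1 * Sigma * (bool * 'I_n.+1) * option 'I_n.+1 * 'I_k.+1 |
        let: (q, a, (b, i), op, q') := t in
        (i == om (tst q a) n) && (Some (op, q') == omap cv (nxt q a b))] |}.

Definition apop (op : option 'I_n.+1) (d : data) (S : 'I_n.+1 -> seq data) :
  'I_n.+1 -> seq data :=
  match op with
  | None => S
  | Some j => fun k => if k == j then d :: S k else S k
  end.

Fixpoint accf (q : 'I_k.+1) (S : 'I_n.+1 -> seq data) (w : dword Sigma) : bool :=
  match w with
  | [::] => fin q
  | (a, d) :: w' =>
    match nxt q a (d \in S (om (tst q a) n)) with
    | Some (op, q') => accf (om q' k) (apop (omap (om ^~ n) op) d S) w'
    | None => false
    end
  end.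

Lemma mkS_det : deterministic mkS.
Proof.
move=> q a b1 i1 op1 q1 b2 i2 op2 q2; rewrite !inE /=.
move=> /andP[/eqP -> /eqP H1] /andP[/eqP -> /eqP H2]; split=> // eb.
by subst b2; rewrite -H2 in H1; case: H1.
Qed.

Lemma accE (q : st mkS) (S : sets_conf mkS) w : acc q S w <-> accf q S w.
Proof.
elim: w q S => [|[a d] w IH] q S /=; first by rewrite inE.
split.
  move=> [b [i [op [q' [H1 [H2 H3]]]]]]; move: H1; rewrite inE /= => /andP[/eqP Ei /eqP E].
  subst i b; move: E H3; case: (nxt q a _) => // -[op0 q0'] [E1 E2] H3.
  subst op q'; exact/IH.
case E: (nxt q a _) => [[op0 q0']|] // H.
exists (d \in S (om (tst q a) n)), (om (tst q a) n), (omap (om ^~ n) op0), (om q0' k).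
by rewrite inE /= eqxx E /=; split=> //; split=> //; apply/IH.
Qed.

Lemma mkS_lang : DSAFA_lang (fun w => accf (om s0 k) (fun _ => [::]) w).
Proof.
exists mkS; split; first exact: mkS_det.
by move=> w; split => H; apply/accE.
Qed.

End Mk.


Section Compl.
Variables (Sigma : finType) (M : SAFA Sigma).
Hypothesis detM : deterministic M.
Let n := nsets M.
Let wd : 'I_n -> 'I_n.+1 := widen_ord (leqnSn n).

Definition jf (q : st M) (a : Sigma) : 'I_n.+1 :=
  if [pick t | (t \in delta M) && (t.1.1.1.1 == q) && (t.1.1.1.2 == a)] is Some t
  then wd t.1.1.2.2 else ord_max.

Definition cdelta : {set (option (st M) * Sigma * (bool * 'I_n.+1) * option 'I_n.+1 * option (st M))} :=
  [set t | let: (q, a, (b, j), op', r) := t in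
     match q with
     | None => (j == ord_max) && (op' == None) && (r == None)
     | Some q =>
       [exists i : 'I_n, exists op : option 'I_n, exists q' : st M,
          ((q, a, (b, i), op, q') \in delta M) && (j == wd i) && (op' == omap wd op) && (r == Some q')]
       || (~~ [exists i : 'I_n, exists op : option 'I_n, exists q' : st M, (q, a, (b, i), op, q') \in delta M]
           && (j == jf q a) && (op' == None) && (r == None))
     end].

Definition cM : SAFA Sigma :=
  {| st := option (st M); nsets := n.+1; q0 := Some (q0 M);
     final := [set q | if q is Some q then q \notin final M else true];
     delta := cdelta |}.

Lemma jfP q a b i op q' : (q, a, (b, i), op, q') \in delta M -> jf q a = wd i.
Proof.
move=> H; rewrite /jf; case: pickP => [[[[[q1 a1] [b1 i1]] op1] q1'] /= /andP[/andP[Ht /eqP E1] /eqP E2]|Hn].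
  by subst q1 a1; have [-> _] := detM Ht H.
by have := Hn (q, a, (b, i), op, q'); rewrite H !eqxx.
Qed.

Lemma jfN q a : (forall b i op q', (q, a, (b, i), op, q') \notin delta M) -> jf q a = ord_max.
Proof.
move=> H; rewrite /jf; case: pickP => [[[[[q1 a1] [b1 i1]] op1] q1'] /= /andP[/andP[Ht /eqP E1] /eqP E2]|//].
by subst; have := H b1 i1 op1 q1'; rewrite Ht.
Qed.

Lemma cM_det : deterministic cM.
Proof.
move=> q a b1 j1 op1 r1 b2 j2 op2 r2; rewrite /= !inE.
case: q => [q|]; last first.
  by move=> /andP[/andP[/eqP -> /eqP ->] /eqP ->] /andP[/andP[/eqP -> /eqP ->] /eqP ->].
move=> /orP[/existsP[i1 /existsP[o1 /existsP[q1 /andP[/andP[/andP[H1 /eqP ->] /eqP ->] /eqP ->]]]]|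
            /andP[/andP[/andP[N1 /eqP ->] /eqP ->] /eqP ->]];
move=> /orP[/existsP[i2 /existsP[o2 /existsP[q2 /andP[/andP[/andP[H2 /eqP ->] /eqP ->] /eqP ->]]]]|
            /andP[/andP[/andP[N2 /eqP ->] /eqP ->] /eqP ->]].
- have [ei Hb] := detM H1 H2; subst i2; split => // eb.
  by have [-> ->] := Hb eb.
- rewrite (jfP H1); split => // eb; subst b2.
  by move: N2; rewrite negb_exists => /forallP /(_ i1); rewrite negb_exists => /forallP /(_ o1);
     rewrite negb_exists => /forallP /(_ q1); rewrite H1.
- rewrite (jfP H2); split => // eb; subst b2.
  by move: N1; rewrite negb_exists => /forallP /(_ i2); rewrite negb_exists => /forallP /(_ o2);
     rewrite negb_exists => /forallP /(_ q2); rewrite H2.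
- by [].
Qed.

Lemma cM_sink (S : sets_conf cM) w : acc (None : st cM) S w.
Proof.
elim: w S => [|[a d] w IH] S //=; first by rewrite inE.
exists (d \in S ord_max), ord_max, None, None; split; last by split.
by rewrite inE /= !eqxx.
Qed.

Lemma cM_correct w (q : st M) (S : sets_conf M) (S' : sets_conf cM) :
  (forall i, S' (wd i) = S i) ->
  acc (Some q : st cM) S' w <-> ~ acc q S w.
Proof.
elim: w q S S' => [|[a d] w IH] q S S' HS /=.
  by rewrite inE; split => [/negP|/negP].
have Hap : forall op, forall i, @apply_op _ cM (omap wd op) d S' (wd i) = apply_op op d S i.
  move=> [j|] i //=; have -> : (wd i == wd j) = (i == j) by [].
  by rewrite HS.
split.
  move=> [b [j [op' [r [H1 [H2 H3]]]]]] [b2 [i2 [o2 [q2 [G1 [G2 G3]]]]]].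
  move: H1; rewrite inE /= => /orP[/existsP[i1 /existsP[o1 /existsP[q1 /andP[/andP[/andP[H1 /eqP E1] /eqP E2] /eqP E3]]]]|
            /andP[/andP[/andP[N1 /eqP E1] /eqP E2] /eqP E3]].
    subst j op' r.
    have [ei Hb] := detM H1 G1; subst i2.
    rewrite HS in H2; have [eo eq] := Hb (etrans (esym H2) G2); subst o2 q2.
    by move: H3; rewrite (IH q1 (apply_op o1 d S)).
  have Hex : [exists i, exists op, exists q', (q, a, (b2, i), op, q') \in delta M].
    by apply/existsP; exists i2; apply/existsP; exists o2; apply/existsP; exists q2.
  case Eb: (b2 == b); first by move/eqP: Eb => Eb; rewrite Eb in Hex; rewrite Hex in N1.
  move: E1; rewrite (jfP G1) => E1; subst j.
  rewrite HS in H2; move: Eb; by rewrite -H2 -G2 eqxx.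
move=> Hn.
case: (boolP [exists t, (t \in delta M) && (t.1.1.1.1 == q) && (t.1.1.1.2 == a)]).
  move=> /existsP[[[[[q0' a0] [b0 i0]] o0] q0''] /= /andP[/andP[H0 /eqP E1] /eqP E2]]; subst q0' a0.
  case: (boolP [exists op, exists q', (q, a, (d \in S i0, i0), op, q') \in delta M]).
    move=> /existsP[o1 /existsP[q1 H1]].
    exists (d \in S i0), (wd i0), (omap wd o1), (Some q1); split.
      rewrite inE /=; apply/orP; left; apply/existsP; exists i0; apply/existsP; exists o1; apply/existsP; exists q1.
      by rewrite H1 !eqxx.
    split; first by rewrite HS.
    apply/(IH q1 (apply_op o1 d S)) => // Hacc; apply: Hn.
    by exists (d \in S i0), i0, o1, q1.
  move=> N.
  exists (d \in S i0), (wd i0), None, None; split; last by split; [rewrite HS | apply: cM_sink].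
  rewrite inE /=; apply/orP; right; rewrite (jfP H0) !eqxx !andbT.
  apply/existsP => -[i /existsP[o /existsP[q' H]]].
  have [ei _] := detM H0 H; subst i.
  by move/existsP: N; apply; exists o; apply/existsP; exists q'.
move=> N.
have N' : forall b i op q', (q, a, (b, i), op, q') \notin delta M.
  move=> b i op q'; apply/negP => H; move/existsP: N; apply.
  by exists (q, a, (b, i), op, q'); rewrite H !eqxx.
exists (d \in S' ord_max), ord_max, None, None; split; last by split; last apply: cM_sink.
rewrite inE /=; apply/orP; right; rewrite (jfN N') !eqxx !andbT.
apply/existsP => -[i /existsP[o /existsP[q' H]]].
by rewrite (negbTE (N' _ _ _ _)) in H.
Qed.

End Compl.

Lemma compl_closed (Sigma : finType) (L : dlang Sigma) :
  DSAFA_lang L -> DSAFA_lang (lcompl L).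
Proof.
move=> [M [detM HL]]; exists (cM M); split; first exact: cM_det.
move=> w; rewrite /lcompl /accepts /=.
have := @cM_correct _ _ detM w (q0 M) (fun _ => [::]) (fun _ => [::]) (fun _ => erefl).
move=> [Ha Hb]; split => H.
  by apply: Hb => Hc; apply: H; apply/HL.
by move=> Hc; apply: (Ha H); apply/HL.
Qed.


Lemma concP (Sigma : finType) (L1 L2 : dlang Sigma) (b1 b2 : dword Sigma -> bool) :
  (forall u, L1 u <-> b1 u) -> (forall u, L2 u <-> b2 u) -> forall w,
  lconcat L1 L2 w <-> has (fun i => b1 (take i w) && b2 (drop i w)) (iota 0 (size w).+1).
Proof.
move=> H1 H2 w; split.
  move=> [u [v [-> [Hu Hv]]]]; apply/hasP; exists (size u).
    by rewrite mem_iota /= size_cat ltnS leq_addr.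
  by rewrite take_size_cat // drop_size_cat //; apply/andP; split; [apply/H1|apply/H2].
move=> /hasP[i _ /andP[Hu Hv]]; exists (take i w), (drop i w).
by rewrite cat_take_drop; split=> //; split; [apply/H1|apply/H2].
Qed.

Fixpoint starb (Sigma : finType) (L : dword Sigma -> bool) (f : nat) (w : dword Sigma) :=
  if f is f'.+1 then (w == [::]) || has (fun i => L (take i w) && starb L f' (drop i w)) (iota 1 (size w))
  else w == [::].

Lemma starP (Sigma : finType) (L : dlang Sigma) (Lb : dword Sigma -> bool) :
  (forall u, L u <-> Lb u) -> ~ L [::] -> forall f w, size w <= f ->
  lstar L w <-> starb Lb f w.
Proof.
move=> HL HE; elim=> [|f IH] w Hs /=.
  move: Hs; rewrite leqn0 => /nilP ->; split => // _; by exists [::].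
split.
  move=> [[|u ws] [Hw Hall]]; subst w => //=.
  case: (altP ((u ++ flatten ws) =P [::])) => [-> //|Hne]; apply/orP; right.
  have Hu : L u by apply: Hall; rewrite inE eqxx.
  have Hu0 : 0 < size u by case: (u) Hu => //.
  apply/hasP; exists (size u).
    by rewrite mem_iota Hu0 /= size_cat add1n ltnS leq_addr.
  rewrite take_size_cat // drop_size_cat //; apply/andP; split; first by apply/HL.
  apply/IH.
    by move: Hs; rewrite size_cat; case: (u) Hu0 => // e u0 _; rewrite /= addSn ltnS; apply: leq_trans; rewrite leq_addl.
  by exists ws; split => // v Hv; apply: Hall; rewrite inE Hv orbT.
move=> /orP[/eqP ->|/hasP[i]]; first by exists [::].
rewrite mem_iota => /andP[Hi1 Hi2] /andP[Hu Hv].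
have Hs' : size (drop i w) <= f by rewrite size_drop; lia.
move/(IH _ Hs'): Hv => [ws [Hd Hall]].
exists (take i w :: ws); split; first by rewrite /= -Hd cat_take_drop.
move=> v; rewrite inE => /orP[/eqP ->|Hv]; [by apply/HL | by apply: Hall].
Qed.

Definition h0 (e : bool * data) : dword bool := [:: (true, e.2)].

Fixpoint allpre (w : dword bool) : seq (dword bool) :=
  if w is (_, d) :: w' then [seq (x, d) :: u | x <- [:: true; false], u <- allpre w'] else [:: [::]].

Lemma allpre_hom u : u \in allpre (hom_ext h0 u).
Proof.
elim: u => [|[x d] u IH] //=.
rewrite !mem_cat; case: x; [apply/orP; left | apply/orP; right; rewrite orbF];
  exact: (map_f _ IH).
Qed.

Lemma allpre_inv w u : all (fun e => e.1) w -> u \in allpre w -> w = hom_ext h0 u.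
Proof.
elim: w u => [|[x d] w IH] u /=; first by rewrite inE => _ /eqP ->.
case: x => //= Hw; rewrite !mem_cat orbF => /orP[] /mapP [u' Hu ->] /=;
  by rewrite (IH _ Hw Hu).
Qed.

Lemma homP (L : dlang bool) (Lb : dword bool -> bool) :
  (forall u, L u <-> Lb u) -> forall w, all (fun e => e.1) w ->
  limage h0 L w <-> has Lb (allpre w).
Proof.
move=> HL w Hw; split.
  by move=> [u [Hu ->]]; apply/hasP; exists u; [apply: allpre_hom | apply/HL].
by move=> /hasP[u Hu Hb]; exists u; split; [apply/HL | apply: allpre_inv].
Qed.

Lemma DSAFA_ext (Sigma : finType) (L L' : dlang Sigma) :
  (forall w, L w <-> L' w) -> DSAFA_lang L -> DSAFA_lang L'.
Proof.
move=> H [M [d HM]]; exists M; split => // w; rewrite -HM; split; apply H.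
Qed.

Definition nx (q : nat) (a : bool) (b : bool) : option (option nat * nat) :=
  match q with
  | 0 => Some (Some 0, 1)
  | 1 => Some (None, if b then 2 else 3)
  | 2 => Some (None, if b then 4 else 5)
  | 3 => if b then Some (None, 6) else None
  | 4 => Some (None, 7) | 5 => Some (None, 8) | 6 => Some (None, 9)
  | 7 => Some (None, 10) | 8 => Some (None, 10)
  | 11 => Some (None, if b then 2 else 3)
  | 12 => Some (None, 0)
  | 13 => Some (Some 0, if a then 1 else 11)
  | 14 => if a then Some (Some 0, 1) else Some (None, 0)
  | 15 => Some (None, 16)
  | 20 => Some (None, 21) | 21 => Some (Some 0, 22) | 22 => Some (None, 23)
  | 23 => Some (Some 1, if b then 24 else 25)
  | 24 => Some (None, if b then 26 else 27)
  | 25 => if b then Some (None, 28) else None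
  | 26 => Some (None, 29) | 28 => Some (None, 29)
  | 30 => Some (Some 0, 31) | 31 => Some (None, 32) | 32 => Some (Some 1, 33)
  | 33 => Some (None, 34)
  | 34 => Some (None, if b then 35 else 40)
  | 35 => Some (None, 36) | 36 => Some (None, 37) | 37 => Some (None, 38)
  | 40 => if b then Some (None, 41) else None
  | 41 => if b then Some (None, 42) else None
  | 42 => Some (None, 38)
  | _ => None
  end.
Definition fn (q : nat) : bool := q \in [:: 7; 9; 10; 11; 15; 16; 24; 26; 27; 28; 29; 38].
Definition ts (q : nat) (a : bool) : nat := if q \in [:: 24; 25; 40] then 1 else 0.

Definition LB (s : nat) (w : dword bool) : bool :=
  accf (k := 42) (n := 1) fn ts nx (om s 42) (fun _ => [::]) w.

Lemma LB_lang s : DSAFA_lang (fun w => LB s w).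
Proof. exact: mkS_lang. Qed.

Definition aw (ds : seq nat) : dword bool := [seq (true, d) | d <- ds].

Ltac kill := let H := fresh in move=> H; vm_compute in H;
  case: H => ? ?; intuition discriminate.

Lemma no_union : ~ DSAFA_lang (lunion (fun w => LB 0 w) (fun w => LB 12 w)).
Proof.
move=> /hard /(_ (aw [:: 0; 1]) true 0 1 2 (aw [:: 3]) (aw [:: 3]) (aw [:: 3; 4; 5]) erefl erefl erefl).
by case; last case; kill.
Qed.

Lemma no_inter : ~ DSAFA_lang (linter (lcompl (fun w => LB 0 w)) (lcompl (fun w => LB 12 w))).
Proof.
move=> /compl_closed D; apply: no_union; apply: DSAFA_ext D => w.
rewrite /lcompl /linter /lunion; split.
  by move=> H; case: (LB 0 w) H => /=; [left | case: (LB 12 w) => /=; [right | tauto]].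
by move=> [H|H] [H1 H2].
Qed.

Lemma no_concat : ~ DSAFA_lang (lconcat (fun w => LB 15 w) (fun w => LB 0 w)).
Proof.
move=> D; have D' := DSAFA_ext (concP (b1 := LB 15) (b2 := LB 0) (fun u => iff_refl _) (fun u => iff_refl _)) D.
move: (@hard _ _ D' (aw [:: 0; 1]) true 0 1 2 (aw [:: 3]) (aw [:: 3]) (aw [:: 3; 4; 5]) erefl erefl erefl).
by case; last case; kill.
Qed.

Lemma no_star : ~ DSAFA_lang (lstar (fun w => LB 13 w)).
Proof.
move=> D.
have HE : ~ LB 13 [::] by move=> H; vm_compute in H; discriminate.
have D' := DSAFA_ext (fun w => starP (Lb := LB 13) (fun u => iff_refl _) HE (leqnn (size w))) D.
move: (@hard _ _ D' [:: (false, 0); (true, 1)] true 0 1 2 (aw [:: 3]) (aw [:: 3]) (aw [:: 3; 4; 5]) erefl erefl erefl).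
by case; last case; kill.
Qed.

Lemma no_rev : ~ DSAFA_lang (lrev (fun w => LB 20 w)).
Proof.
move=> D.
move: (@hard _ _ D (aw [:: 0; 1]) true 0 1 2 (aw [:: 3]) (aw [:: 3]) (aw [:: 3; 4; 5]) erefl erefl erefl).
by case; last case; kill.
Qed.

Lemma no_hom : ~ DSAFA_lang (limage h0 (fun w => LB 14 w)).
Proof.
move=> D.
have D' : DSAFA_lang (fun w => if all (fun e => e.1) w then is_true (has (LB 14) (allpre w))
                              else limage h0 (fun w => LB 14 w) w).
  apply: DSAFA_ext D => w; case E: (all _ w); last by [].
  exact: (homP (Lb := LB 14) (fun u => iff_refl _) E).
move: (@hard _ _ D' (aw [:: 0; 1]) true 0 1 2 (aw [:: 3]) (aw [:: 3]) (aw [:: 3; 4; 5]) erefl erefl erefl).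
by case; last case; kill.
Qed.

Definition h1 (e : bool * data) : dword bool := [:: e; e].

Lemma no_pre : ~ DSAFA_lang (lpreimage h1 (fun w => LB 30 w)).
Proof.
move=> D.
move: (@hard _ _ D (aw [:: 0; 1]) true 0 1 2 (aw [:: 3]) (aw [:: 1]) (aw [:: 0]) erefl erefl erefl).
by case; last case; kill.
Qed.

Theorem theorem12 :
  (forall (Sigma : finType) (L : dlang Sigma),
      DSAFA_lang L -> DSAFA_lang (lcompl L)) /\
  (exists (Sigma : finType) (L1 L2 : dlang Sigma),
      DSAFA_lang L1 /\ DSAFA_lang L2 /\ ~ DSAFA_lang (lunion L1 L2)) /\
  (exists (Sigma : finType) (L1 L2 : dlang Sigma),
      DSAFA_lang L1 /\ DSAFA_lang L2 /\ ~ DSAFA_lang (linter L1 L2)) /\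
  (exists (Sigma : finType) (L1 L2 : dlang Sigma),
      DSAFA_lang L1 /\ DSAFA_lang L2 /\ ~ DSAFA_lang (lconcat L1 L2)) /\
  (exists (Sigma : finType) (L : dlang Sigma),
      DSAFA_lang L /\ ~ DSAFA_lang (lstar L)) /\
  (exists (Sigma : finType) (L : dlang Sigma),
      DSAFA_lang L /\ ~ DSAFA_lang (lrev L)) /\
  (exists (Sigma : finType) (L : dlang Sigma) (h : Sigma * data -> dword Sigma),
      DSAFA_lang L /\ ~ DSAFA_lang (limage h L)) /\
  (exists (Sigma : finType) (L : dlang Sigma) (h : Sigma * data -> dword Sigma),
      DSAFA_lang L /\ ~ DSAFA_lang (lpreimage h L)).
Proof.
split; first exact: compl_closed.
split; first by exists bool, (fun w => LB 0 w), (fun w => LB 12 w); split; [apply: LB_lang | split; [apply: LB_lang | apply: no_union]].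
split.
  exists bool, (lcompl (fun w => LB 0 w)), (lcompl (fun w => LB 12 w)).
  by split; [apply/compl_closed/LB_lang | split; [apply/compl_closed/LB_lang | apply: no_inter]].
split; first by exists bool, (fun w => LB 15 w), (fun w => LB 0 w); split; [apply: LB_lang | split; [apply: LB_lang | apply: no_concat]].
split; first by exists bool, (fun w => LB 13 w); split; [apply: LB_lang | apply: no_star].
split; first by exists bool, (fun w => LB 20 w); split; [apply: LB_lang | apply: no_rev].
split; first by exists bool, (fun w => LB 14 w), h0; split; [apply: LB_lang | apply: no_hom].
by exists bool, (fun w => LB 30 w), h1; split; [apply: LB_lang | apply: no_pre].
Qed.
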